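(* Let $n\ge 2$ and $1\le k\le n-1$. Suppose $F$ is absolutely continuous, $h$ is continuous on $[l_F,r_F]$, and $h^{(k)}$ is continuous on $(l_F,r_F)$. Assume that for every $v\in(l_F,r_F)$ the quantity ${}_0M_k(l_F,v)=\frac{\partial^k}{\partial v^k}\frac{h(v)-h(l_F)}{v-l_F}$ is nonzero. Then \[ E[h^{(k)}(X(n))\mid X(n-k)=u,\ X(n+1)=v]=k\,{}_0M_{k-1}(u,v)\qquad\text{for all } l_F<u<v<r_F \] holds if and only if $l_F>-\infty$, $r_F=\infty$ and $F(x)=1-e^{-c(x-l_F)}$ for $x\ge l_F$, for some constant $c>0$.
   Context: $X_1,X_2,\dots$ are i.i.d. copies of a random variable $X$ with distribution function $F$; $l_F=\inf\{x:F(x)>0\}$, $r_F=\sup\{x:F(x)<1\}$. Upper record times: $L(1)=1$, $L(m)=\min\{j>L(m-1): X_j>X_{L(m-1)}\}$; upper record values $X(m)=X_{L(m)}$. Let $R(x)=-\ln(1-F(x))$. Conditional expectations given $X(n-k)=u$, $X(n+r)=v$ ($1\le k\le n-1$, $r\ge1$, $u<v$) are taken with respect to the conditional density of $X(n)$ \[ t\mapsto \frac{(k+r-1)!}{(k-1)!(r-1)!}\Big[\tfrac{R(t)-R(u)}{R(v)-R(u)}\Big]^{k-1}\Big[\tfrac{R(v)-R(t)}{R(v)-R(u)}\Big]^{r-1}\frac{R'(t)}{R(v)-R(u)},\quad u<t<v. \] For a function $h$ set $M(u,v)=\frac{h(v)-h(u)}{v-u}$ ($u\ne v$) and ${}_iM_j(u,v)=\frac{\partial^{i+j}}{\partial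 u^i\partial v^j}M(u,v)$; ${}_iM={}_iM_0$, $M_j={}_0M_j$. *)

(* Defs.v *)
From Stdlib Require Import Reals Lra Lia Factorial.
Open Scope R_scope.

Fixpoint sumN (f : nat -> R) (N : nat) : R :=
  match N with
  | O => 0
  | S m => sumN f m + f m
  end.

Definition is_cdf (F : R -> R) : Prop :=
  (forall x y, x <= y -> F x <= F y) /\
  (forall x eps, 0 < eps -> exists d, 0 < d /\
      forall y, x <= y < x + d -> Rabs (F y - F x) < eps) /\
  (forall eps, 0 < eps -> exists M, forall x, x < M -> F x < eps) /\
  (forall eps, 0 < eps -> exists M, forall x, M < x -> 1 - eps < F x).

Definition abs_continuous (F : R -> R) : Prop :=
  forall eps, 0 < eps -> exists delta, 0 < delta /\
    forall (N : nat) (a b : nat -> R),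
      (forall i, (i < N)%nat -> a i <= b i) ->
      (forall i, (S i < N)%nat -> b i <= a (S i)) ->
      sumN (fun i => b i - a i) N < delta ->
      sumN (fun i => Rabs (F (b i) - F (a i))) N < eps.

(* l = l_F = inf {x : F x > 0}  (in particular l_F is finite) *)
Definition is_lF (F : R -> R) (l : R) : Prop :=
  (forall x, 0 < F x -> l <= x) /\
  (forall y, (forall x, 0 < F x -> y <= x) -> y <= l).

(* x < r_F = sup {x : F x < 1} *)
Definition below_rF (F : R -> R) (x : R) : Prop :=
  exists y, x < y /\ F y < 1.

(* x <= r_F *)
Definition le_rF (F : R -> R) (x : R) : Prop :=
  forall z, z < x -> exists y, z < y /\ F y < 1.

Definition rF_infinite (F : R -> R) : Prop :=
  forall M, exists y, M < y /\ F y < 1.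

Definition in_open (F : R -> R) (l x : R) : Prop := l < x /\ below_rF F x.
Definition in_closed (F : R -> R) (l x : R) : Prop := l <= x /\ le_rF F x.

Definition deriv_chain (D : R -> Prop) (f : R -> R) (n : nat) (g : nat -> R -> R) : Prop :=
  (forall x, D x -> g O x = f x) /\
  (forall j x, (j < n)%nat -> D x -> derivable_pt_lim (g j) x (g (S j) x)).

Definition RS_integral (g alpha : R -> R) (a b I : R) : Prop :=
  forall eps, 0 < eps -> exists delta, 0 < delta /\
    forall (N : nat) (x xi : nat -> R),
      x O = a -> x N = b ->
      (forall i, (i < N)%nat -> x i <= xi i <= x (S i)) ->
      (forall i, (i < N)%nat -> x (S i) - x i < delta) ->
      Rabs (sumN (fun i => g (xi i) * (alpha (x (S i)) - alpha (x i))) N - I) < eps.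

Definition Rfun (F : R -> R) (x : R) : R := - ln (1 - F x).

(* the conditional density of X(n) given X(n-k)=u, X(n+r)=v, without the factor R'(t) *)
Definition cond_weight (F : R -> R) (k r : nat) (u v t : R) : R :=
  INR (fact (k + r - 1)) / (INR (fact (k - 1)) * INR (fact (r - 1))) *
  ((Rfun F t - Rfun F u) / (Rfun F v - Rfun F u)) ^ (k - 1) *
  ((Rfun F v - Rfun F t) / (Rfun F v - Rfun F u)) ^ (r - 1) *
  / (Rfun F v - Rfun F u).

(* E[g(X(n)) | X(n-k)=u, X(n+r)=v] = I, i.e.
   int_u^v g(t) * weight(t) R'(t) dt = I, written as a Riemann-Stieltjes integral dR(t)
   (R is absolutely continuous on [u,v]). *)
Definition cond_exp (F g : R -> R) (k r : nat) (u v I : R) : Prop :=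
  RS_integral (fun t => g t * cond_weight F k r u v t) (Rfun F) u v I.

(* Main.v *)
Require Import Defs.
From Stdlib Require Import Reals Lra Lia Psatz Factorial Classical.
Open Scope R_scope.

Lemma sumN_ext f g N : (forall i, (i < N)%nat -> f i = g i) -> sumN f N = sumN g N.
Proof. induction N; simpl; intros H; auto. rewrite IHN, H; auto. Qed.

Lemma sumN_scal c f N : sumN (fun i => c * f i) N = c * sumN f N.
Proof. induction N; simpl; [ring| rewrite IHN; ring]. Qed.

Lemma sumN_add f g N : sumN (fun i => f i + g i) N = sumN f N + sumN g N.
Proof. induction N; simpl; [ring| rewrite IHN; ring]. Qed.

Lemma sumN_minus f g N : sumN (fun i => f i - g i) N = sumN f N - sumN g N.
Proof. induction N; simpl; [ring| rewrite IHN; ring]. Qed.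

Lemma sumN_tele g N : sumN (fun i => g (S i) - g i) N = g N - g O.
Proof. induction N; simpl; [ring| rewrite IHN; ring]. Qed.

Lemma sumN_split f N M : sumN f (N + M) = sumN f N + sumN (fun i => f (N + i)%nat) M.
Proof. induction M; simpl. rewrite Nat.add_0_r; ring. rewrite Nat.add_succ_r; simpl; rewrite IHM; ring. Qed.

Lemma sumN_le f g N : (forall i, (i < N)%nat -> f i <= g i) -> sumN f N <= sumN g N.
Proof. induction N; simpl; intros H. lra. assert (f N <= g N) by auto. assert (sumN f N <= sumN g N) by auto. lra. Qed.

Lemma sumN_abs f N : Rabs (sumN f N) <= sumN (fun i => Rabs (f i)) N.
Proof. induction N; simpl. rewrite Rabs_R0; lra. eapply Rle_trans. apply Rabs_triang. lra. Qed.

Lemma RS_scal f g al a b I C : RS_integral f al a b I -> (forall t, g t = C * f t) ->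
  RS_integral g al a b (C * I).
Proof.
  intros H Hg eps Heps.
  destruct (H (eps / (Rabs C + 1))) as [d [Hd Hs]].
  { apply Rdiv_lt_0_compat; auto. pose proof (Rabs_pos C); lra. }
  exists d; split; auto. intros N x xi H0 HN Ht Hm.
  specialize (Hs N x xi H0 HN Ht Hm).
  rewrite (sumN_ext _ (fun i => C * (f (xi i) * (al (x (S i)) - al (x i))))).
  2:{ intros; rewrite Hg; ring. }
  rewrite sumN_scal, <- Rmult_minus_distr_l, Rabs_mult.
  pose proof (Rabs_pos C).
  apply Rle_lt_trans with ((Rabs C + 1) * Rabs (sumN (fun i => f (xi i) * (al (x (S i)) - al (x i))) N - I)).
  pose proof (Rabs_pos (sumN (fun i => f (xi i) * (al (x (S i)) - al (x i))) N - I)). nra.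
  apply Rmult_lt_reg_l with (/ (Rabs C + 1)). apply Rinv_0_lt_compat; lra.
  rewrite <- Rmult_assoc, Rinv_l by lra. unfold Rdiv in Hs. lra.
Qed.

Lemma abs_le_inv x a : Rabs x <= a -> - a <= x <= a.
Proof. unfold Rabs; destruct (Rcase_abs x); intros; lra. Qed.
Lemma abs_lt_inv x a : Rabs x < a -> - a < x < a.
Proof. unfold Rabs; destruct (Rcase_abs x); intros; lra. Qed.

Lemma arch_N r : exists N : nat, (1 <= N)%nat /\ r < INR N.
Proof. destruct (INR_unbounded r) as [n Hn]. exists (S n). split. lia. rewrite S_INR; lra. Qed.

Lemma uniform_pt a b N j : (0 < N)%nat -> (j <= N)%nat -> a <= b ->
  a <= a + INR j * ((b - a) / INR N) <= b.
Proof.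
  intros HN Hj Hab. assert (0 < INR N) by (apply lt_0_INR; lia).
  assert (INR j <= INR N) by (apply le_INR; lia). pose proof (pos_INR j).
  assert (0 <= (b - a) / INR N) by (unfold Rdiv; apply Rmult_le_pos; [lra|left; apply Rinv_0_lt_compat; lra]).
  split. nra. 
  assert (INR j * ((b - a) / INR N) <= INR N * ((b - a) / INR N)) by nra.
  replace (INR N * ((b - a) / INR N)) with (b - a) in H3 by (field; lra). lra.
Qed.

Lemma RS_split f al u a b I1 I2 p w : u < a -> a < b ->
  RS_integral f al u a I1 -> RS_integral f al u b I2 ->
  (forall t, a <= t <= b -> Rabs (f t - f p) <= w) ->
  (forall x y, a <= x -> x <= y -> y <= b -> al x <= al y) ->
  Rabs (I2 - I1 - f p * (al b - al a)) <= w * (al b - al a).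
Proof.
  intros Hua Hab H1 H2 Hw Hal.
  apply Rle_plus_epsilon. intros eps Heps.
  destruct (H1 (eps/2)) as [d1 [Hd1 Hs1]]; [lra|].
  destruct (H2 (eps/2)) as [d2 [Hd2 Hs2]]; [lra|].
  set (d := Rmin d1 d2).
  assert (Hd : 0 < d) by (apply Rmin_pos; lra).
  destruct (arch_N ((b - u) / d)) as [N [HN1 HN]].
  assert (HNp : 0 < INR N) by (apply lt_0_INR; lia).
  set (e1 := (a - u) / INR N). set (e2 := (b - a) / INR N).
  assert (He1 : 0 < e1) by (apply Rdiv_lt_0_compat; lra).
  assert (He2 : 0 < e2) by (apply Rdiv_lt_0_compat; lra).
  assert (Hbd : (b - u) / INR N < d).
  { apply Rmult_lt_reg_r with (INR N); auto. unfold Rdiv. rewrite Rmult_assoc, Rinv_l by lra.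
    apply Rmult_lt_reg_r with (/ d). apply Rinv_0_lt_compat; lra.
    rewrite Rmult_1_r. replace (d * INR N * / d) with (INR N) by (field; lra). exact HN. }
  assert (Hd1' : e1 < d).
  { apply Rle_lt_trans with ((b-u)/INR N). unfold e1, Rdiv. apply Rmult_le_compat_r.
    left; apply Rinv_0_lt_compat; lra. lra. auto. }
  assert (Hd2' : e2 < d).
  { apply Rle_lt_trans with ((b-u)/INR N). unfold e2, Rdiv. apply Rmult_le_compat_r.
    left; apply Rinv_0_lt_compat; lra. lra. auto. }
  assert (d <= d1) by apply Rmin_l. assert (d <= d2) by apply Rmin_r.
  set (x1 := fun i : nat => u + INR i * e1).
  set (y := fun j : nat => a + INR j * e2).
  set (x := fun i : nat => if (i <=? N)%nat then x1 i else y (i - N)%nat).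
  assert (Hx1N : x1 N = a) by (unfold x1, e1; field; lra).
  assert (HyN : y N = b) by (unfold y, e2; field; lra).
  assert (Hy0 : y O = a) by (unfold y; simpl; ring).
  assert (Hxl : forall i, (i <= N)%nat -> x i = x1 i).
  { intros i Hi; unfold x. destruct (Nat.leb_spec i N); [auto|lia]. }
  assert (Hxr : forall j, x (N + j)%nat = y j).
  { intros j; unfold x. destruct (Nat.leb_spec (N + j) N).
    - assert (j = O) by lia. subst j. rewrite Nat.add_0_r. rewrite Hx1N, Hy0. auto.
    - f_equal; lia. }
  assert (Hx1S : forall i, x1 (S i) - x1 i = e1) by (intros; unfold x1; rewrite S_INR; ring).
  assert (HyS : forall i, y (S i) - y i = e2) by (intros; unfold y; rewrite S_INR; ring).
  specialize (Hs1 N x1 x1). 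
  assert (A1 : Rabs (sumN (fun i => f (x1 i) * (al (x1 (S i)) - al (x1 i))) N - I1) < eps / 2).
  { apply Hs1. unfold x1; simpl; ring. exact Hx1N.
    intros i _; pose proof (Hx1S i); lra. intros i _; rewrite Hx1S; lra. }
  specialize (Hs2 (N + N)%nat x x).
  assert (A2 : Rabs (sumN (fun i => f (x i) * (al (x (S i)) - al (x i))) (N + N) - I2) < eps / 2).
  { apply Hs2.
    - rewrite Hxl by lia. unfold x1; simpl; ring.
    - rewrite Hxr; auto.
    - intros i Hi. destruct (Nat.lt_ge_cases i N).
      + rewrite !Hxl by lia. pose proof (Hx1S i); lra.
      + replace i with (N + (i - N))%nat by lia. replace (S (N + (i - N))) with (N + S (i - N))%nat by lia.
        rewrite !Hxr. pose proof (HyS (i - N)%nat); lra.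
    - intros i Hi. destruct (Nat.lt_ge_cases i N).
      + rewrite !Hxl by lia. rewrite Hx1S; lra.
      + replace i with (N + (i - N))%nat by lia. replace (S (N + (i - N))) with (N + S (i - N))%nat by lia.
        rewrite !Hxr. rewrite HyS; lra. }
  rewrite sumN_split in A2.
  rewrite (sumN_ext (fun i => f (x i) * (al (x (S i)) - al (x i))) (fun i => f (x1 i) * (al (x1 (S i)) - al (x1 i)))) in A2
    by (intros i Hi; rewrite !Hxl by lia; auto).
  rewrite (sumN_ext (fun i => f (x (N + i)%nat) * (al (x (S (N + i))) - al (x (N + i)%nat))) (fun i => f (y i) * (al (y (S i)) - al (y i)))) in A2
    by (intros i Hi; replace (S (N + i)) with (N + S i)%nat by lia; rewrite !Hxr; auto).
  set (S1 := sumN (fun i => f (x1 i) * (al (x1 (S i)) - al (x1 i))) N) in *.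
  set (T := sumN (fun i => f (y i) * (al (y (S i)) - al (y i))) N) in *.
  assert (Hyin : forall j, (j <= N)%nat -> a <= y j <= b).
  { intros j Hj. unfold y, e2. apply uniform_pt; [lia|lia|lra]. }
  assert (Htel : al b - al a = sumN (fun j => al (y (S j)) - al (y j)) N).
  { rewrite (sumN_tele (fun j => al (y j))), HyN, Hy0; auto. }
  assert (HT : Rabs (T - f p * (al b - al a)) <= w * (al b - al a)).
  { replace (T - f p * (al b - al a)) with (sumN (fun j => (f (y j) - f p) * (al (y (S j)) - al (y j))) N).
    2:{ unfold T. rewrite Htel, <- sumN_scal, <- sumN_minus.
        apply sumN_ext; intros; ring. }
    eapply Rle_trans. apply sumN_abs.
    rewrite Htel, <- sumN_scal.
    apply sumN_le. intros j Hj. rewrite Rabs_mult.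
    assert (0 <= al (y (S j)) - al (y j)).
    { pose proof (Hyin j ltac:(lia)). pose proof (Hyin (S j) ltac:(lia)). pose proof (HyS j).
      assert (al (y j) <= al (y (S j))) by (apply Hal; lra). lra. }
    rewrite (Rabs_right (al (y (S j)) - al (y j))) by lra.
    apply Rmult_le_compat_r; auto. apply Hw. apply Hyin; lia. }
  apply abs_le_inv in HT. apply abs_lt_inv in A1. apply abs_lt_inv in A2.
  apply Rabs_le. lra.
Qed.

Lemma part_lo (x : nat -> R) N : (forall i, (i < N)%nat -> x i <= x (S i)) ->
  forall i, (i <= N)%nat -> x O <= x i.
Proof. intros H i; induction i; intros Hi. lra. specialize (H i ltac:(lia)). specialize (IHi ltac:(lia)). lra. Qed.

Lemma part_hi (x : nat -> R) N : (forall i, (i < N)%nat -> x i <= x (S i)) ->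
  forall m, (m <= N)%nat -> x (N - m)%nat <= x N.
Proof. intros H m; induction m; intros Hm. rewrite Nat.sub_0_r; lra.
  specialize (IHm ltac:(lia)). specialize (H (N - S m)%nat ltac:(lia)).
  replace (S (N - S m)) with (N - m)%nat in H by lia. lra. Qed.

Lemma part_in (x : nat -> R) N : (forall i, (i < N)%nat -> x i <= x (S i)) ->
  forall i, (i <= N)%nat -> x O <= x i <= x N.
Proof. intros H i Hi. split. apply (part_lo x N H i Hi).
  pose proof (part_hi x N H (N - i)%nat ltac:(lia)). replace (N - (N - i))%nat with i in H0 by lia. auto. Qed.

Lemma RS_antideriv f al Phi phi u v K c : u < v ->
  (forall t, u <= t <= v -> derivable_pt_lim Phi t (phi t)) ->
  (forall t, u <= t <= v -> continuity_pt phi t) ->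
  (forall x y, u <= x <= v -> u <= y <= v -> al y - al x = c * (y - x)) ->
  (forall t, u <= t <= v -> f t = K * phi t) ->
  RS_integral f al u v (K * c * (Phi v - Phi u)).
Proof.
  intros Huv HD HC Hal Hf eps Heps.
  pose proof (Rabs_pos (K * c)) as HKc.
  set (e' := eps / ((Rabs (K * c) + 1) * (v - u + 1))).
  assert (He' : 0 < e') by (unfold e'; apply Rdiv_lt_0_compat; [lra| apply Rmult_lt_0_compat; lra]).
  destruct (Heine phi (fun t => u <= t <= v) (compact_P3 u v) HC (mkposreal e' He')) as [dl Hdl].
  exists (pos dl); split. apply cond_pos.
  intros N x xi Hx0 HxN Ht Hm.
  assert (Hmon : forall i, (i < N)%nat -> x i <= x (S i)) by (intros i Hi; specialize (Ht i Hi); lra).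
  assert (Hin : forall i, (i <= N)%nat -> u <= x i <= v) by (intros; rewrite <- Hx0, <- HxN; apply (part_in x N Hmon); auto).
  assert (Hstep : forall i, (i < N)%nat ->
     Rabs (f (xi i) * (al (x (S i)) - al (x i)) - K * c * (Phi (x (S i)) - Phi (x i)))
       <= Rabs (K * c) * e' * (x (S i) - x i)).
  { intros i Hi. pose proof (Hin i ltac:(lia)). pose proof (Hin (S i) ltac:(lia)). pose proof (Ht i Hi). pose proof (Hm i Hi).
    rewrite Hf by lra. rewrite Hal by lra.
    destruct (Req_dec (x i) (x (S i))) as [Heq|Hne].
    { rewrite Heq. replace (K * phi (xi i) * (c * (x (S i) - x (S i))) - K * c * (Phi (x (S i)) - Phi (x (S i)))) with 0 by ring.
      rewrite Rabs_R0. replace (x (S i) - x (S i)) with 0 by ring. lra. }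
    destruct (MVT_cor2 Phi phi (x i) (x (S i))) as [eta [He Heta]]. lra.
    { intros; apply HD; lra. }
    rewrite He.
    replace (K * phi (xi i) * (c * (x (S i) - x i)) - K * c * (phi eta * (x (S i) - x i)))
      with ((K * c) * ((phi (xi i) - phi eta) * (x (S i) - x i))) by ring.
    rewrite Rabs_mult, (Rabs_mult (phi (xi i) - phi eta)). rewrite (Rabs_right (x (S i) - x i)) by lra.
    rewrite Rmult_assoc. apply Rmult_le_compat_l; auto. apply Rmult_le_compat_r. lra.
    left. apply (Hdl (xi i) eta); try lra. 
    apply Rabs_def1; lra. }
  assert (Htot : Rabs (sumN (fun i => f (xi i) * (al (x (S i)) - al (x i))) N - K * c * (Phi v - Phi u))
     <= Rabs (K * c) * e' * (v - u)).
  { rewrite <- Hx0, <- HxN. rewrite <- (sumN_tele (fun i => Phi (x i))), <- sumN_scal, <- sumN_minus.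
    replace (x N - x O) with (sumN (fun i => x (S i) - x i) N) by apply sumN_tele.
    rewrite <- sumN_scal. eapply Rle_trans. apply sumN_abs. apply sumN_le. auto. }
  eapply Rle_lt_trans. apply Htot.
  unfold e'. 
  replace (Rabs (K * c) * (eps / ((Rabs (K * c) + 1) * (v - u + 1))) * (v - u))
    with (eps * ((Rabs (K * c) / (Rabs (K * c) + 1)) * ((v - u) / (v - u + 1)))) by (field; lra).
  assert (Rabs (K * c) / (Rabs (K * c) + 1) < 1) by (apply Rmult_lt_reg_r with (Rabs (K*c)+1); [lra|]; unfold Rdiv; rewrite Rmult_assoc, Rinv_l; lra).
  assert ((v - u) / (v - u + 1) < 1) by (apply Rmult_lt_reg_r with (v-u+1); [lra|]; unfold Rdiv; rewrite Rmult_assoc, Rinv_l; lra).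
  assert (0 <= Rabs (K * c) / (Rabs (K * c) + 1)) by (unfold Rdiv; apply Rmult_le_pos; [lra|left; apply Rinv_0_lt_compat; lra]).
  assert (0 <= (v - u) / (v - u + 1)) by (unfold Rdiv; apply Rmult_le_pos; [lra|left; apply Rinv_0_lt_compat; lra]).
  assert (Rabs (K * c) / (Rabs (K * c) + 1) * ((v - u) / (v - u + 1)) < 1) by nra.
  nra.
Qed.

Fixpoint P (hd : nat -> R -> R) (h : R -> R) (u : R) (j : nat) (t : R) : R :=
  match j with
  | O => hd O t - h u
  | S j' => (t - u) ^ (S j') * hd (S j') t - INR (S j') * P hd h u j' t
  end.

Lemma deriv_shift_pow u n t : derivable_pt_lim (fun t => (t - u) ^ n) t (INR n * (t - u) ^ pred n).
Proof.
  replace (INR n * (t - u) ^ pred n) with ((INR n * (t - u) ^ pred n) * 1) by ring.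
  apply (derivable_pt_lim_comp (fun t => t - u) (fun y => y ^ n)).
  replace 1 with (1 - 0) by ring. apply (derivable_pt_lim_minus id (fct_cte u)).
  apply derivable_pt_lim_id. apply derivable_pt_lim_const.
  apply derivable_pt_lim_pow.
Qed.

Lemma P_deriv hd h u k t :
  (forall i, (i < k)%nat -> derivable_pt_lim (hd i) t (hd (S i) t)) ->
  forall j, (j < k)%nat -> derivable_pt_lim (P hd h u j) t ((t - u) ^ j * hd (S j) t).
Proof.
  intros Hd j. induction j; intros Hj.
  - simpl. replace (1 * hd 1%nat t) with (hd 1%nat t - 0) by ring.
    apply (derivable_pt_lim_minus (hd O) (fct_cte (h u))). auto. apply derivable_pt_lim_const.
  - change (P hd h u (S j)) with (fun t => (t - u) ^ (S j) * hd (S j) t - INR (S j) * P hd h u j t).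
    replace ((t - u) ^ S j * hd (S (S j)) t) with
      ((INR (S j) * (t - u) ^ pred (S j) * hd (S j) t + (t - u) ^ (S j) * hd (S (S j)) t)
        - (0 * P hd h u j t + INR (S j) * ((t - u) ^ j * hd (S j) t))).
    2:{ simpl pred. ring. }
    apply (derivable_pt_lim_minus (fun t => (t - u) ^ (S j) * hd (S j) t) (fun t => INR (S j) * P hd h u j t)).
    + apply (derivable_pt_lim_mult (fun t => (t - u) ^ (S j)) (hd (S j))). apply deriv_shift_pow. auto.
    + apply (derivable_pt_lim_mult (fct_cte (INR (S j))) (P hd h u j)). apply derivable_pt_lim_const.
      apply IHj; lia.
Qed.

Lemma P_at_u hd h u : hd O u = h u -> forall j, P hd h u j u = 0.
Proof. intros H j; induction j; simpl. rewrite H; ring. rewrite IHj. ring. Qed.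

Lemma Q_deriv hd h u k t j :
  (forall i, (i < k)%nat -> derivable_pt_lim (hd i) t (hd (S i) t)) -> (j < k)%nat -> t <> u ->
  derivable_pt_lim (fun w => P hd h u j w / (w - u) ^ (S j)) t (P hd h u (S j) t / (t - u) ^ (S (S j))).
Proof.
  intros Hd Hj Htu.
  assert (Hne : t - u <> 0) by lra.
  assert (Hp : (t - u) ^ j <> 0) by (apply pow_nonzero; auto).
  replace (P hd h u (S j) t / (t - u) ^ S (S j)) with
    ((((t - u) ^ j * hd (S j) t) * (t - u) ^ (S j) - (INR (S j) * (t - u) ^ pred (S j)) * P hd h u j t) / Rsqr ((t - u) ^ (S j))).
  2:{ change (P hd h u (S j) t) with ((t - u) ^ (S j) * hd (S j) t - INR (S j) * P hd h u j t). simpl pred. unfold Rsqr. rewrite <- !tech_pow_Rmult. field. split; auto. }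
  apply (derivable_pt_lim_div (P hd h u j) (fun w => (w - u) ^ (S j))).
  apply P_deriv with k; auto. apply deriv_shift_pow. apply pow_nonzero; auto.
Qed.

Lemma deriv_loc f g x d : derivable_pt_lim f x d ->
  (exists del, 0 < del /\ forall y, Rabs (y - x) < del -> f y = g y) -> derivable_pt_lim g x d.
Proof.
  intros Hf [del [Hdel Heq]] eps Heps.
  destruct (Hf eps Heps) as [d1 Hd1].
  assert (Hm : 0 < Rmin d1 del) by (apply Rmin_pos; [apply cond_pos|lra]).
  exists (mkposreal _ Hm). intros hh Hh0 Hh. simpl in Hh.
  rewrite <- !Heq. apply Hd1; auto. eapply Rlt_le_trans; [apply Hh| apply Rmin_l].
  rewrite Rminus_diag, Rabs_R0; lra.
  replace (x + hh - x) with hh by ring. eapply Rlt_le_trans; [apply Hh| apply Rmin_r].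
Qed.

Lemma chain_exists hd h u k (Dh E : R -> Prop) m :
  (forall x, Dh x -> hd O x = h x) ->
  (forall j x, (j < k)%nat -> Dh x -> derivable_pt_lim (hd j) x (hd (S j) x)) ->
  (m <= k)%nat -> (forall w, E w -> u < w /\ Dh w) ->
  deriv_chain E (fun w => (h w - h u) / (w - u)) m (fun j w => P hd h u j w / (w - u) ^ (S j)).
Proof.
  intros H0 Hd Hm HE. split.
  - intros x Ex. destruct (HE x Ex). simpl. rewrite H0 by auto. field. lra.
  - intros j x Hj Ex. destruct (HE x Ex). apply Q_deriv with k. intros; apply Hd; auto. lia. lra.
Qed.

Lemma chain_unique hd h u k (Dh E : R -> Prop) m G :
  (forall x, Dh x -> hd O x = h x) ->
  (forall j x, (j < k)%nat -> Dh x -> derivable_pt_lim (hd j) x (hd (S j) x)) ->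
  (m <= k)%nat -> (forall w, E w -> u < w /\ Dh w) ->
  (forall w, E w -> exists del, 0 < del /\ forall y, Rabs (y - w) < del -> E y) ->
  deriv_chain E (fun w => (h w - h u) / (w - u)) m G ->
  forall j, (j <= m)%nat -> forall w, E w -> G j w = P hd h u j w / (w - u) ^ (S j).
Proof.
  intros H0 Hd Hm HE Hop [HG0 HGd] j. induction j; intros Hj w Ew.
  - rewrite HG0 by auto. destruct (HE w Ew). simpl. rewrite H0 by auto. field. lra.
  - apply (uniqueness_limite (G j) w).
    + apply HGd; auto.
    + apply deriv_loc with (fun w => P hd h u j w / (w - u) ^ (S j)).
      * destruct (HE w Ew). apply Q_deriv with k. intros; apply Hd; auto. lia. lra.
      * destruct (Hop w Ew) as [del [Hdel Hy]]. exists del; split; auto.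
        intros y Hyw. symmetry. apply IHj; [lia|]. auto.
Qed.

Lemma pow_div a b n : b <> 0 -> (a / b) ^ n = a ^ n / b ^ n.
Proof. intros Hb; induction n; simpl. field. rewrite IHn. field. split; auto. apply pow_nonzero; auto. Qed.

Lemma cont_of_deriv f x d : derivable_pt_lim f x d -> continuity_pt f x.
Proof. intros H. apply derivable_continuous_pt. exists d; auto. Qed.

Lemma if_dir (F h : R -> R) (hd : nat -> R -> R) (k : nat) (l c : R) :
  (1 <= k)%nat ->
  deriv_chain (in_open F l) h k hd ->
  (forall x, in_open F l x -> continuity_pt (hd k) x) ->
  rF_infinite F -> 0 < c -> (forall x, l <= x -> F x = 1 - exp (- (c * (x - l)))) ->
  (forall u v, in_open F l u -> in_open F l v -> u < v ->
     forall G, deriv_chain (fun w => u < w /\ in_open F l w)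
                           (fun w => (h w - h u) / (w - u)) (k - 1) G ->
     cond_exp F (hd k) k 1 u v (INR k * G (k - 1)%nat v)).
Proof.
  intros Hk [Hh0 Hhd] Hhk Hinf Hc HF u v Hu Hv Huv G HG.
  destruct k as [|k0]; [lia|]. replace (S k0 - 1)%nat with k0 in * by lia.
  assert (Hopen : forall x, l < x -> in_open F l x).
  { intros x Hx; split; auto. destruct (Hinf x) as [y [Hy1 Hy2]]. exists y; auto. }
  destruct Hu as [Hlu _].
  assert (HGv : G k0 v = P hd h u k0 v / (v - u) ^ (S k0)).
  { apply (chain_unique hd h u (S k0) (in_open F l) (fun w => u < w /\ in_open F l w) k0 G Hh0 Hhd).
    - lia.
    - intros w [Hw1 Hw2]; auto.
    - intros w [Hw1 Hw2]. exists (w - u); split. lra. intros y Hy.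
      apply Rabs_def2 in Hy. split. lra. apply Hopen; lra.
    - auto.
    - lia.
    - split. auto. apply Hopen; lra. }
  rewrite HGv. unfold cond_exp.
  assert (HR : forall t, l <= t -> Rfun F t = c * (t - l)).
  { intros t Ht. unfold Rfun. rewrite HF by auto.
    replace (1 - (1 - exp (- (c * (t - l))))) with (exp (- (c * (t - l)))) by ring.
    rewrite ln_exp. ring. }
  set (K := INR (S k0) / ((v - u) ^ (S k0) * c)).
  assert (Hvu : (v - u) ^ k0 <> 0) by (apply pow_nonzero; lra).
  replace (INR (S k0) * (P hd h u k0 v / (v - u) ^ S k0)) with (K * c * (P hd h u k0 v - P hd h u k0 u)).
  2:{ rewrite P_at_u. unfold K. simpl pow. field. repeat split; lra || auto.
      apply Hh0. apply Hopen; lra. }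
  apply RS_antideriv with (phi := fun t => (t - u) ^ k0 * hd (S k0) t); auto.
  - intros t Ht. apply P_deriv with (S k0). intros i Hi. apply Hhd; auto. apply Hopen; lra. lia.
  - intros t Ht. apply (continuity_pt_mult (fun t => (t - u) ^ k0) (hd (S k0))).
    apply cont_of_deriv with (INR k0 * (t - u) ^ pred k0). apply deriv_shift_pow.
    apply Hhk. apply Hopen; lra.
  - intros x y Hx Hy. rewrite !HR by lra. ring.
  - intros t Ht. unfold cond_weight. rewrite !HR by lra.
    replace (S k0 + 1 - 1)%nat with (S k0) by lia. replace (S k0 - 1)%nat with k0 by lia.
    replace (1 - 1)%nat with O by lia. rewrite fact_simpl, mult_INR.
    assert (Hcvu : c * (v - l) - c * (u - l) <> 0) by (intro Hz; assert (c * (v - u) > 0) by (apply Rmult_lt_0_compat; lra); lra).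
    replace ((c * (t - l) - c * (u - l)) / (c * (v - l) - c * (u - l))) with ((t - u) / (v - u)) by (field; split; lra).
    rewrite pow_div by lra. unfold K. change (fact 0) with 1%nat. rewrite pow_O, <- tech_pow_Rmult. change (INR 1) with 1.
    pose proof (INR_fact_neq_0 k0). field. repeat split; lra || auto.
Qed.

Lemma deriv_bound f x d : derivable_pt_lim f x d ->
  forall eps, 0 < eps -> exists del, 0 < del /\ forall y, Rabs (y - x) < del ->
    Rabs (f y - f x - d * (y - x)) <= eps * Rabs (y - x).
Proof.
  intros H eps Heps. destruct (H eps Heps) as [del Hd]. exists del; split. apply cond_pos.
  intros y Hy. destruct (Req_dec y x) as [->|Hne].
  - replace (f x - f x - d * (x - x)) with 0 by ring. rewrite Rabs_R0, Rminus_diag, Rabs_R0. lra.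
  - assert (Hh : y - x <> 0) by lra.
    specialize (Hd (y - x) Hh Hy). replace (x + (y - x)) with y in Hd by ring.
    replace (f y - f x - d * (y - x)) with (((f y - f x) / (y - x) - d) * (y - x)) by (field; auto).
    rewrite Rabs_mult. apply Rmult_le_compat_r. apply Rabs_pos. lra.
Qed.

Lemma cont_eps f x : continuity_pt f x ->
  forall eps, 0 < eps -> exists del, 0 < del /\ forall y, Rabs (y - x) < del -> Rabs (f y - f x) < eps.
Proof.
  intros H eps Heps. destruct (H eps Heps) as [del [Hdel Hd]]. exists del; split; auto.
  intros y Hy. destruct (Req_dec y x) as [->|Hne].
  - rewrite Rminus_diag, Rabs_R0; auto.
  - apply (Hd y). split. split. exact I. auto. exact Hy.
Qed.

Lemma abs_tri3 a b c : Rabs (a + b + c) <= Rabs a + Rabs b + Rabs c.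
Proof. eapply Rle_trans. apply Rabs_triang. pose proof (Rabs_triang a b). lra. Qed.

Lemma final_bound a x d hh C1 C2 eps lam : 0 < a -> 0 <= x -> 0 <= d -> 0 <= hh -> 0 <= eps -> 0 <= C1 -> 0 <= C2 ->
  a * x <= eps * C1 * d + eps * C2 * hh -> d <= Rabs lam * hh + x -> eps * C1 <= a / 2 ->
  x <= 2 * eps * (C1 * Rabs lam + C2) / a * hh.
Proof.
  intros. pose proof (Rabs_pos lam).
  assert (a * x <= a / 2 * x + eps * (C1 * Rabs lam + C2) * hh).
  { assert (eps * C1 * d <= eps * C1 * (Rabs lam * hh + x)) by (apply Rmult_le_compat_l; [nra|auto]).
    assert (eps * C1 * x <= a / 2 * x) by (apply Rmult_le_compat_r; auto). nra. }
  apply Rmult_le_reg_l with a; auto.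
  replace (a * (2 * eps * (C1 * Rabs lam + C2) / a * hh)) with (2 * (eps * (C1 * Rabs lam + C2) * hh)) by (field; lra).
  lra.
Qed.

Lemma key_abstract (Rf A : R -> R) (u v a1 hk : R) (k0 : nat) :
  derivable_pt_lim A v a1 -> a1 <> 0 -> continuity_pt Rf v ->
  0 < Rf v - Rf u -> u < v ->
  hk = (v - u) * a1 + INR (S k0) * A v ->
  (forall eps, 0 < eps -> exists eta, 0 < eta /\ forall v', Rabs (v' - v) < eta ->
     Rabs (A v' * (Rf v' - Rf u) ^ (S k0) - A v * (Rf v - Rf u) ^ (S k0)
           - hk * (Rf v - Rf u) ^ k0 * (Rf v' - Rf v)) <= eps * Rabs (Rf v' - Rf v)) ->
  derivable_pt_lim Rf v ((Rf v - Rf u) / (v - u)).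
Proof.
  intros HA Ha1 HRc Hs Huv Hhk Hloc e He.
  set (s := Rf v - Rf u) in *.
  set (lam := s / (v - u)).
  set (Kc := a1 * (v - u) * s ^ k0).
  assert (HKc : 0 < Rabs Kc).
  { apply Rabs_pos_lt. unfold Kc. apply Rmult_integral_contrapositive; split.
    apply Rmult_integral_contrapositive; split; lra. apply pow_nonzero; lra. }
  set (C1 := 1 + Rabs (A v)).
  set (B := Rabs (s ^ S k0) + INR (S k0) * Rabs (s ^ k0) + 1).
  set (C2 := B + Rabs a1 * (INR (S k0) * Rabs (s ^ k0) + 1)).
  assert (HC1 : 0 < C1) by (unfold C1; pose proof (Rabs_pos (A v)); lra).
  assert (HINR : 0 < INR (S k0)) by (apply lt_0_INR; lia).
  assert (HB : 0 <= B) by (unfold B; pose proof (Rabs_pos (s ^ S k0)); pose proof (Rabs_pos (s ^ k0)); nra).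
  assert (HC2 : 0 <= C2).
  { unfold C2. pose proof (Rabs_pos a1). pose proof (Rabs_pos (s ^ k0)). assert (0 <= INR (S k0) * Rabs (s ^ k0)) by nra. nra. }
  assert (HL : 0 <= C1 * Rabs lam + C2) by (pose proof (Rabs_pos lam); nra).
  set (eps := Rmin 1 (Rmin (Rabs Kc / (2 * C1)) (e * Rabs Kc / (4 * (C1 * Rabs lam + C2) + 1)))).
  assert (Heps : 0 < eps).
  { unfold eps. repeat apply Rmin_pos; try lra. apply Rdiv_lt_0_compat; lra.
    apply Rdiv_lt_0_compat. nra. lra. }
  assert (He1 : eps <= 1) by apply Rmin_l.
  assert (He2 : eps <= Rabs Kc / (2 * C1)) by (eapply Rle_trans; [apply Rmin_r| apply Rmin_l]).
  assert (He3 : eps <= e * Rabs Kc / (4 * (C1 * Rabs lam + C2) + 1)) by (eapply Rle_trans; [apply Rmin_r| apply Rmin_r]).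
  destruct (deriv_bound A v a1 HA eps Heps) as [dA [HdA HA']].
  destruct (deriv_bound (fun y => y ^ S k0) s _ (derivable_pt_lim_pow s (S k0)) eps Heps) as [dp [Hdp Hp']].
  simpl pred in Hp'.
  destruct (cont_eps Rf v HRc (Rmin eps dp) ltac:(apply Rmin_pos; lra)) as [dR [HdR HR']].
  destruct (Hloc eps Heps) as [dL [HdL HL']].
  assert (Hm : 0 < Rmin (Rmin dA dR) dL) by (repeat apply Rmin_pos; lra).
  exists (mkposreal _ Hm). intros hh Hh0 Hhh. simpl in Hhh.
  assert (Hh1 : Rabs hh < dA) by (eapply Rlt_le_trans; [apply Hhh| eapply Rle_trans; [apply Rmin_l | apply Rmin_l]]).
  assert (Hh2 : Rabs hh < dR) by (eapply Rlt_le_trans; [apply Hhh| eapply Rle_trans; [apply Rmin_l | apply Rmin_r]]).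
  assert (Hh3 : Rabs hh < dL) by (eapply Rlt_le_trans; [apply Hhh| apply Rmin_r]).
  set (v' := v + hh).
  assert (Hvv : v' - v = hh) by (unfold v'; ring).
  set (Dl := Rf v' - Rf v).
  specialize (HA' v'). rewrite Hvv in HA'. specialize (HA' Hh1).
  specialize (HR' v'). rewrite Hvv in HR'. specialize (HR' Hh2). fold Dl in HR'.
  specialize (HL' v'). rewrite Hvv in HL'. specialize (HL' Hh3). fold Dl in HL'.
  assert (HDe : Rabs Dl < eps) by (eapply Rlt_le_trans; [apply HR'| apply Rmin_l]).
  assert (HDp : Rabs Dl < dp) by (eapply Rlt_le_trans; [apply HR'| apply Rmin_r]).
  assert (HS' : Rf v' - Rf u = s + Dl) by (unfold Dl, s; ring).
  specialize (Hp' (s + Dl)). replace (s + Dl - s) with Dl in Hp' by ring. specialize (Hp' HDp).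
  rewrite HS' in HL'.
  set (E1 := A v' - A v - a1 * hh) in *.
  set (E2 := (s + Dl) ^ S k0 - s ^ S k0 - INR (S k0) * s ^ k0 * Dl) in *.
  set (E3 := A v' * (s + Dl) ^ S k0 - A v * s ^ S k0 - hk * s ^ k0 * Dl) in *.
  set (X := lam * hh - Dl).
  assert (Hid : Kc * X = E3 - E1 * (s + Dl) ^ S k0 - A v * E2 - a1 * hh * (INR (S k0) * s ^ k0 * Dl + E2)).
  { unfold Kc, X, lam, E1, E2, E3. rewrite Hhk. simpl pow. field. lra. }
  assert (HSb : Rabs ((s + Dl) ^ S k0) <= B).
  { replace ((s + Dl) ^ S k0) with (s ^ S k0 + INR (S k0) * s ^ k0 * Dl + E2) by (unfold E2; ring).
    eapply Rle_trans. apply abs_tri3. unfold B. rewrite !Rabs_mult, (Rabs_right (INR (S k0))) by lra.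
    pose proof (Rabs_pos (s ^ k0)). pose proof (Rabs_pos Dl).
    assert (INR (S k0) * Rabs (s ^ k0) * Rabs Dl <= INR (S k0) * Rabs (s ^ k0)).
    { rewrite <- (Rmult_1_r (INR (S k0) * Rabs (s ^ k0))) at 2. apply Rmult_le_compat_l; nra. }
    assert (Rabs E2 <= 1) by (pose proof (Rabs_pos Dl); nra). lra. }
  assert (HX : Rabs Kc * Rabs X <= eps * C1 * Rabs Dl + eps * C2 * Rabs hh).
  { rewrite <- Rabs_mult, Hid.
    pose proof (Rabs_pos Dl). pose proof (Rabs_pos hh). pose proof (Rabs_pos E1). pose proof (Rabs_pos E2).
    pose proof (Rabs_pos a1). pose proof (Rabs_pos (A v)). pose proof (Rabs_pos (s ^ k0)).
    assert (T1 : Rabs (E1 * (s + Dl) ^ S k0) <= eps * B * Rabs hh).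
    { rewrite Rabs_mult. pose proof (Rabs_pos ((s + Dl) ^ S k0)).
      apply Rle_trans with (eps * Rabs hh * B). apply Rmult_le_compat; auto. nra. }
    assert (T2 : Rabs (A v * E2) <= Rabs (A v) * eps * Rabs Dl).
    { rewrite Rabs_mult, Rmult_assoc. apply Rmult_le_compat_l; auto. }
    assert (T3 : Rabs (a1 * hh * (INR (S k0) * s ^ k0 * Dl + E2)) <= Rabs a1 * (INR (S k0) * Rabs (s ^ k0) + 1) * eps * Rabs hh).
    { rewrite !Rabs_mult.
      assert (Rabs (INR (S k0) * s ^ k0 * Dl + E2) <= (INR (S k0) * Rabs (s ^ k0) + 1) * eps).
      { eapply Rle_trans. apply Rabs_triang. rewrite !Rabs_mult, (Rabs_right (INR (S k0))) by lra.
        assert (INR (S k0) * Rabs (s ^ k0) * Rabs Dl <= INR (S k0) * Rabs (s ^ k0) * eps) by (apply Rmult_le_compat_l; nra).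
        assert (Rabs E2 <= eps) by nra. nra. }
      pose proof (Rabs_pos (INR (S k0) * s ^ k0 * Dl + E2)). 
      apply Rle_trans with (Rabs a1 * Rabs hh * ((INR (S k0) * Rabs (s ^ k0) + 1) * eps)).
      apply Rmult_le_compat_l; nra. nra. }
    unfold Rminus. eapply Rle_trans. apply Rabs_triang. rewrite Rabs_Ropp.
    eapply Rle_trans. apply Rplus_le_compat_r. apply Rabs_triang. rewrite Rabs_Ropp.
    eapply Rle_trans. apply Rplus_le_compat_r. apply Rplus_le_compat_r. apply Rabs_triang. rewrite Rabs_Ropp.
    unfold C1, C2. nra. }
  assert (HDX : Rabs Dl <= Rabs lam * Rabs hh + Rabs X).
  { replace Dl with (lam * hh - X) by (unfold X; ring). unfold Rminus. eapply Rle_trans. apply Rabs_triang. rewrite Rabs_Ropp.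
    rewrite Rabs_mult. lra. }
  assert (HepsC : eps * C1 <= Rabs Kc / 2).
  { apply Rle_trans with (Rabs Kc / (2 * C1) * C1). apply Rmult_le_compat_r; lra. right; field; lra. }
  pose proof (final_bound (Rabs Kc) (Rabs X) (Rabs Dl) (Rabs hh) C1 C2 eps lam HKc (Rabs_pos _) (Rabs_pos _) (Rabs_pos _) ltac:(lra) ltac:(lra) HC2 HX HDX HepsC) as Hfin.
  replace (v + hh) with v' by reflexivity. fold Dl.
  replace (Dl / hh - lam) with (- X / hh) by (unfold X, lam; field; repeat split; try assumption; lra).
  unfold Rdiv. rewrite Rabs_mult, Rabs_Ropp, Rabs_inv by auto.
  assert (0 < Rabs hh) by (apply Rabs_pos_lt; auto).
  apply Rmult_lt_reg_r with (Rabs hh); auto. rewrite Rmult_assoc, Rinv_l by lra. rewrite Rmult_1_r.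
  eapply Rle_lt_trans. apply Hfin.
  assert (2 * eps * (C1 * Rabs lam + C2) / Rabs Kc <= e / 2).
  { apply Rle_trans with (2 * (e * Rabs Kc / (4 * (C1 * Rabs lam + C2) + 1)) * (C1 * Rabs lam + C2) / Rabs Kc).
    unfold Rdiv. apply Rmult_le_compat_r. left; apply Rinv_0_lt_compat; lra.
    apply Rmult_le_compat_r; auto. lra.
    replace (2 * (e * Rabs Kc / (4 * (C1 * Rabs lam + C2) + 1)) * (C1 * Rabs lam + C2) / Rabs Kc)
      with (e / 2 * ((4 * (C1 * Rabs lam + C2)) / (4 * (C1 * Rabs lam + C2) + 1))) by (field; lra).
    assert (4 * (C1 * Rabs lam + C2) / (4 * (C1 * Rabs lam + C2) + 1) <= 1).
    { apply Rmult_le_reg_r with (4 * (C1 * Rabs lam + C2) + 1). lra. unfold Rdiv. rewrite Rmult_assoc, Rinv_l by lra. lra. }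
    nra. }
  nra.
Qed.

Lemma F_cont_eps F : abs_continuous F ->
  forall x eps, 0 < eps -> exists d, 0 < d /\ forall y, Rabs (y - x) < d -> Rabs (F y - F x) < eps.
Proof.
  intros HF x eps Heps. destruct (HF eps Heps) as [d [Hd H]]. exists d; split; auto.
  intros y Hy. destruct (Rle_dec x y) as [Hxy|Hxy].
  - specialize (H 1%nat (fun _ => x) (fun _ => y)). simpl in H.
    assert (0 + Rabs (F y - F x) < eps).
    { apply H. intros; lra. intros; lia. rewrite Rabs_right in Hy; lra. }
    lra.
  - specialize (H 1%nat (fun _ => y) (fun _ => x)). simpl in H.
    assert (0 + Rabs (F x - F y) < eps).
    { apply H. intros; lra. intros; lia. rewrite Rabs_left in Hy; lra. }
    rewrite Rabs_minus_sym. lra.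
Qed.

Lemma F_continuity F : abs_continuous F -> continuity F.
Proof.
  intros HF x eps Heps. destruct (F_cont_eps F HF x eps Heps) as [d [Hd H]].
  exists d; split; auto. intros y [_ Hy]. simpl in *. unfold R_dist in *. auto.
Qed.

Lemma F_pos_right F l : is_cdf F -> is_lF F l -> forall x, l < x -> 0 < F x.
Proof.
  intros [Hmon _] [Hl1 Hl2] x Hx. destruct (Rlt_le_dec 0 (F x)) as [H|H]; auto.
  exfalso. assert (x <= l).
  { apply Hl2. intros y Hy. destruct (Rle_dec x y) as [|Hn]; auto.
    assert (F y <= F x) by (apply Hmon; lra). lra. }
  lra.
Qed.

Lemma F_l0 F l : is_cdf F -> abs_continuous F -> is_lF F l -> F l = 0.
Proof.
  intros HF HFa Hl. pose proof (F_pos_right F l HF Hl) as Hpos. destruct Hl as [Hl1 Hl2].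
  destruct (Rtotal_order (F l) 0) as [H|[H|H]]; auto; exfalso.
  - destruct (F_cont_eps F HFa l (- F l)) as [d [Hd Hc]]. lra.
    specialize (Hc (l + d/2)). specialize (Hpos (l + d / 2) ltac:(lra)).
    assert (Rabs (l + d / 2 - l) < d) by (rewrite Rabs_right; lra). specialize (Hc H0).
    apply abs_lt_inv in Hc. lra.
  - destruct (F_cont_eps F HFa l (F l)) as [d [Hd Hc]]. lra.
    specialize (Hc (l - d/2)).
    assert (Rabs (l - d / 2 - l) < d) by (rewrite Rabs_left; lra). specialize (Hc H0).
    apply abs_lt_inv in Hc. assert (l <= l - d/2) by (apply Hl1; lra). lra.
Qed.

Lemma open_lt1 F l x : is_cdf F -> in_open F l x -> F x < 1.
Proof. intros [Hmon _] [_ [y [Hy1 Hy2]]]. assert (F x <= F y) by (apply Hmon; lra). lra. Qed.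

Lemma open_nbhd F l x : in_open F l x -> exists del, 0 < del /\ forall y, Rabs (y - x) < del -> in_open F l y.
Proof.
  intros [Hlx [y0 [Hy0 Hy1]]]. exists (Rmin (x - l) (y0 - x)). split. apply Rmin_pos; lra.
  intros y Hy. pose proof (Rmin_l (x - l) (y0 - x)). pose proof (Rmin_r (x - l) (y0 - x)).
  apply abs_lt_inv in Hy. split. lra. exists y0; split; auto; lra.
Qed.

Lemma Rfun_cont F x : abs_continuous F -> F x < 1 -> continuity_pt (Rfun F) x.
Proof.
  intros HFa Hx. unfold Rfun.
  change (fun x => - ln (1 - F x)) with (- (comp ln (fct_cte 1 - F)))%F.
  apply continuity_pt_opp. apply continuity_pt_comp.
  apply continuity_pt_minus. apply continuity_pt_const. intros a b; reflexivity.
  apply F_continuity; auto.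
  apply (fun f x d (H : derivable_pt_lim f x d) => derivable_continuous_pt f x (exist _ d H)) with (/ (1 - F x)). apply derivable_pt_lim_ln. unfold fct_cte, minus_fct. lra.
Qed.

Lemma ln_le' x y : 0 < x -> x <= y -> ln x <= ln y.
Proof. intros Hx Hxy. destruct (Req_dec x y) as [->|Hne]. lra. left; apply ln_increasing; lra. Qed.

Lemma R_mono F x y : is_cdf F -> x <= y -> F y < 1 -> Rfun F x <= Rfun F y.
Proof.
  intros [Hmon _] Hxy Hy. assert (F x <= F y) by auto. unfold Rfun.
  assert (ln (1 - F y) <= ln (1 - F x)) by (apply ln_le'; lra). lra.
Qed.

Lemma R_pos F x : 0 < F x -> F x < 1 -> 0 < Rfun F x.
Proof. intros. unfold Rfun. assert (ln (1 - F x) < ln 1) by (apply ln_increasing; lra). rewrite ln_1 in H1. lra. Qed.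

Lemma R_zero F x : F x = 0 -> Rfun F x = 0.
Proof. intros H. unfold Rfun. rewrite H, Rminus_0_r, ln_1. ring. Qed.

Definition RLim (l : R) (f : R -> R) (L : R) : Prop :=
  forall eps, 0 < eps -> exists d, 0 < d /\ forall u, l < u < l + d -> Rabs (f u - L) < eps.

Lemma RLim_cont l f : continuity_pt f l -> RLim l f (f l).
Proof.
  intros H eps Heps. destruct (cont_eps f l H eps Heps) as [d [Hd Hc]]. exists d; split; auto.
  intros u Hu. apply Hc. rewrite Rabs_right; lra.
Qed.

Lemma RLim_minus l f g a b : RLim l f a -> RLim l g b -> RLim l (fun u => f u - g u) (a - b).
Proof.
  intros Hf Hg eps Heps. destruct (Hf (eps/2)) as [d1 [Hd1 H1]]; [lra|]. destruct (Hg (eps/2)) as [d2 [Hd2 H2]]; [lra|].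
  exists (Rmin d1 d2); split. apply Rmin_pos; lra. intros u Hu.
  pose proof (Rmin_l d1 d2). pose proof (Rmin_r d1 d2).
  specialize (H1 u ltac:(lra)). specialize (H2 u ltac:(lra)).
  apply abs_lt_inv in H1. apply abs_lt_inv in H2. apply Rabs_def1; lra.
Qed.

Lemma RLim_mulc l f a c : RLim l f a -> RLim l (fun u => f u * c) (a * c).
Proof.
  intros Hf eps Heps. destruct (Hf (eps / (Rabs c + 1))) as [d [Hd H]].
  apply Rdiv_lt_0_compat; [lra| pose proof (Rabs_pos c); lra].
  exists d; split; auto. intros u Hu. specialize (H u Hu).
  replace (f u * c - a * c) with ((f u - a) * c) by ring. rewrite Rabs_mult.
  pose proof (Rabs_pos c). pose proof (Rabs_pos (f u - a)).
  apply Rle_lt_trans with (eps / (Rabs c + 1) * Rabs c). apply Rmult_le_compat_r; lra.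
  replace (eps / (Rabs c + 1) * Rabs c) with (eps * (Rabs c / (Rabs c + 1))) by (field; lra).
  assert (Rabs c / (Rabs c + 1) < 1).
  { apply Rmult_lt_reg_r with (Rabs c + 1). lra. unfold Rdiv. rewrite Rmult_assoc, Rinv_l; lra. }
  nra.
Qed.

Lemma RLim_cmul l f a c : RLim l f a -> RLim l (fun u => c * f u) (c * a).
Proof.
  intros H. pose proof (RLim_mulc l f a c H) as H'. intros eps Heps. destruct (H' eps Heps) as [d [Hd Hu]].
  exists d; split; auto. intros u Hu'. specialize (Hu u Hu'). rewrite (Rmult_comm c (f u)), (Rmult_comm c a). auto.
Qed.

Lemma RLim_const l c : RLim l (fun _ => c) c.
Proof. intros eps Heps. exists 1; split. lra. intros. rewrite Rminus_diag, Rabs_R0; auto. Qed.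

Lemma cont_shift_pow v n x : continuity_pt (fun u => (v - u) ^ n) x.
Proof.
  induction n; simpl.
  - apply continuity_pt_const. intros a b; reflexivity.
  - apply (continuity_pt_mult (fun u => v - u) (fun u => (v - u) ^ n)); auto.
    apply (continuity_pt_minus (fct_cte v) id). apply continuity_pt_const. intros a b; reflexivity.
    apply derivable_continuous_pt, derivable_pt_id.
Qed.

Lemma P_RLim hd h l v j : RLim l h (h l) -> RLim l (fun u => P hd h u j v) (P hd h l j v).
Proof.
  intros Hh. induction j.
  - simpl. apply (RLim_minus l (fun _ => hd O v) h). apply RLim_const. auto.
  - change (RLim l (fun u => (v - u) ^ S j * hd (S j) v - INR (S j) * P hd h u j v)
                ((v - l) ^ S j * hd (S j) v - INR (S j) * P hd h l j v)).
    apply (RLim_minus l (fun u => (v - u) ^ S j * hd (S j) v) (fun u => INR (S j) * P hd h u j v)).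
    + apply (RLim_mulc l (fun u => (v - u) ^ S j)). apply (RLim_cont l (fun u => (v - u) ^ S j)). apply cont_shift_pow.
    + apply (RLim_cmul l (fun u => P hd h u j v)). auto.
Qed.

Lemma h_RLim F h l : abs_continuous F -> F l = 0 ->
  (forall x, in_closed F l x -> continue_in h (in_closed F l) x) -> RLim l h (h l).
Proof.
  intros HFa Hl0 Hhc.
  assert (Hcl : in_closed F l l) by (split; [lra| intros z Hz; exists l; split; lra]).
  intros eps Heps. destruct (Hhc l Hcl eps Heps) as [a [Ha Hh]].
  destruct (F_cont_eps F HFa l (1/2)) as [d [Hd HF]]. lra.
  exists (Rmin a d); split. apply Rmin_pos; lra. intros u Hu.
  pose proof (Rmin_l a d). pose proof (Rmin_r a d).
  assert (HFu : F u < 1) by (specialize (HF u ltac:(rewrite Rabs_right; lra)); rewrite Hl0 in HF; apply abs_lt_inv in HF; lra).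
  apply (Hh u). split. split. split. lra. intros z Hz. exists u; split; lra. lra.
  simpl. unfold R_dist. rewrite Rabs_right; lra.
Qed.

Lemma cw_simpl F k0 u v t : Rfun F v - Rfun F u <> 0 ->
  cond_weight F (S k0) 1 u v t = INR (S k0) * (Rfun F t - Rfun F u) ^ k0 / (Rfun F v - Rfun F u) ^ (S k0).
Proof.
  intros Hne. unfold cond_weight.
  replace (S k0 + 1 - 1)%nat with (S k0) by lia. replace (S k0 - 1)%nat with k0 by lia.
  replace (1 - 1)%nat with O by lia. rewrite fact_simpl, mult_INR.
  rewrite pow_div by auto. change (fact 0) with 1%nat. rewrite pow_O, <- tech_pow_Rmult. change (INR 1) with 1.
  pose proof (INR_fact_neq_0 k0). assert ((Rfun F v - Rfun F u) ^ k0 <> 0) by (apply pow_nonzero; auto).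
  field. repeat split; auto.
Qed.

Lemma deriv_R F h hd k0 l u v :
  is_cdf F -> abs_continuous F ->
  (forall x, in_open F l x -> hd O x = h x) ->
  (forall j x, (j < S k0)%nat -> in_open F l x -> derivable_pt_lim (hd j) x (hd (S j) x)) ->
  (forall x, in_open F l x -> continuity_pt (hd (S k0)) x) ->
  (forall u v, in_open F l u -> in_open F l v -> u < v ->
     forall G, deriv_chain (fun w => u < w /\ in_open F l w)
                           (fun w => (h w - h u) / (w - u)) k0 G ->
     cond_exp F (hd (S k0)) (S k0) 1 u v (INR (S k0) * G k0 v)) ->
  l < u -> u < v -> in_open F l v -> Rfun F u < Rfun F v -> P hd h u (S k0) v <> 0 ->
  derivable_pt_lim (Rfun F) v ((Rfun F v - Rfun F u) / (v - u)).
Proof.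
  intros HF HFa Hh0 Hhd Hhk Hid Hlu Huv Hv HRuv HP.
  assert (Hu : in_open F l u).
  { destruct Hv as [_ [y [Hy1 Hy2]]]. split; auto. exists y; split; auto; lra. }
  assert (Hvu : v - u <> 0) by lra.
  set (A := fun w => P hd h u k0 w / (w - u) ^ (S k0)).
  set (phi := fun t => hd (S k0) t * (Rfun F t - Rfun F u) ^ k0).
  assert (RSI : forall w, in_open F l w -> u < w -> Rfun F u < Rfun F w ->
            RS_integral phi (Rfun F) u w (A w * (Rfun F w - Rfun F u) ^ (S k0))).
  { intros w Hw Huw HRw.
    assert (Hc := Hid u w Hu Hw Huw (fun j w => P hd h u j w / (w - u) ^ (S j))
             (chain_exists hd h u (S k0) (in_open F l) (fun w => u < w /\ in_open F l w) k0 Hh0 Hhd ltac:(lia) ltac:(intros w' [H1 H2]; auto))).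
    unfold cond_exp in Hc.
    pose proof (INR_fact_neq_0 k0). assert (HI : INR (S k0) <> 0) by (apply not_0_INR; lia).
    assert (Hne : Rfun F w - Rfun F u <> 0) by lra.
    replace (A w * (Rfun F w - Rfun F u) ^ S k0) with
      ((Rfun F w - Rfun F u) ^ (S k0) / INR (S k0) * (INR (S k0) * (P hd h u k0 w / (w - u) ^ S k0))).
    2:{ unfold A. field. split; auto. apply pow_nonzero; lra. }
    apply RS_scal with (1 := Hc). intros t. unfold phi. rewrite cw_simpl by auto.
    field. split; auto. apply pow_nonzero; auto. }
  apply key_abstract with (A := A) (k0 := k0) (a1 := P hd h u (S k0) v / (v - u) ^ (S (S k0))) (hk := hd (S k0) v).
  - unfold A. apply Q_deriv with (S k0). intros; apply Hhd; auto. lia. lra.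
  - unfold Rdiv. apply Rmult_integral_contrapositive; split; auto. apply Rinv_neq_0_compat, pow_nonzero; auto.
  - apply Rfun_cont; auto. apply open_lt1 with l; auto.
  - lra.
  - auto.
  - unfold A. change (P hd h u (S k0) v) with ((v - u) ^ (S k0) * hd (S k0) v - INR (S k0) * P hd h u k0 v).
    rewrite <- !tech_pow_Rmult. field. split; auto. apply pow_nonzero; auto.
  - intros eps Heps.
    assert (Hphic : continuity_pt phi v).
    { unfold phi. apply (continuity_pt_mult (hd (S k0)) (fun t => (Rfun F t - Rfun F u) ^ k0)). apply Hhk; auto.
      apply (continuity_pt_comp (fun t => Rfun F t - Rfun F u) (fun y => y ^ k0)).
      apply (continuity_pt_minus (Rfun F) (fct_cte (Rfun F u))). apply Rfun_cont; auto. apply open_lt1 with l; auto.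
      apply continuity_pt_const. intros a b; reflexivity.
      apply derivable_continuous_pt, derivable_pt_pow. }
    destruct (cont_eps phi v Hphic eps Heps) as [e1 [He1 Hc1]].
    destruct (open_nbhd F l v Hv) as [e2 [He2 Hc2]].
    destruct (cont_eps (Rfun F) v (Rfun_cont F v HFa (open_lt1 F l v HF Hv)) ((Rfun F v - Rfun F u) / 2)) as [e4 [He4 Hc4]]. lra.
    exists (Rmin (Rmin e1 e2) (Rmin (v - u) e4)). split. repeat apply Rmin_pos; lra.
    intros v' Hv'.
    pose proof (Rmin_l e1 e2). pose proof (Rmin_r e1 e2). pose proof (Rmin_l (v - u) e4). pose proof (Rmin_r (v - u) e4).
    pose proof (Rmin_l (Rmin e1 e2) (Rmin (v - u) e4)). pose proof (Rmin_r (Rmin e1 e2) (Rmin (v - u) e4)).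
    assert (Hv'o : in_open F l v') by (apply Hc2; lra).
    assert (Huv' : u < v') by (apply abs_lt_inv in Hv'; lra).
    assert (HRv' : Rfun F u < Rfun F v') by (specialize (Hc4 v' ltac:(lra)); apply abs_lt_inv in Hc4; lra).
    pose proof (RSI v Hv Huv HRuv) as I1. pose proof (RSI v' Hv'o Huv' HRv') as I2.
    assert (Hph : phi v = hd (S k0) v * (Rfun F v - Rfun F u) ^ k0) by reflexivity.
    rewrite <- Hph.
    destruct (Rtotal_order v v') as [Hlt|[Heq|Hgt]].
    + assert (Hs := RS_split phi (Rfun F) u v v' _ _ v eps Huv Hlt I1 I2).
      assert (Hmon : Rfun F v <= Rfun F v') by (apply R_mono; [auto|lra|apply open_lt1 with l; auto]).
      rewrite (Rabs_right (Rfun F v' - Rfun F v)) by lra.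
      apply Hs.
      * intros t Ht. left. apply Hc1. apply Rabs_def1; apply abs_lt_inv in Hv'; lra.
      * intros x y Hx Hxy Hy. apply R_mono; auto. apply open_lt1 with l; auto. apply Hc2. apply Rabs_def1; apply abs_lt_inv in Hv'; lra.
    + subst v'. replace (A v * (Rfun F v - Rfun F u) ^ S k0 - A v * (Rfun F v - Rfun F u) ^ S k0 - phi v * (Rfun F v - Rfun F v)) with 0 by ring.
      rewrite Rminus_diag, !Rabs_R0. lra.
    + assert (Hs := RS_split phi (Rfun F) u v' v _ _ v eps Huv' Hgt I2 I1).
      assert (Hmon : Rfun F v' <= Rfun F v) by (apply R_mono; auto; [lra| apply open_lt1 with l; auto]).
      rewrite (Rabs_left1 (Rfun F v' - Rfun F v)) by lra.
      replace (A v' * (Rfun F v' - Rfun F u) ^ S k0 - A v * (Rfun F v - Rfun F u) ^ S k0 - phi v * (Rfun F v' - Rfun F v))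
        with (- (A v * (Rfun F v - Rfun F u) ^ S k0 - A v' * (Rfun F v' - Rfun F u) ^ S k0 - phi v * (Rfun F v - Rfun F v'))) by ring.
      rewrite Rabs_Ropp. replace (- (Rfun F v' - Rfun F v)) with (Rfun F v - Rfun F v') by ring.
      apply Hs.
      * intros t Ht. left. apply Hc1. apply Rabs_def1; apply abs_lt_inv in Hv'; lra.
      * intros x y Hx Hxy Hy. apply R_mono; auto. apply open_lt1 with l; auto. apply Hc2. apply Rabs_def1; apply abs_lt_inv in Hv'; lra.
Qed.

Lemma onlyif_dir (F h : R -> R) (hd : nat -> R -> R) (k0 : nat) (l : R)
  (HF : is_cdf F) (HFac : abs_continuous F) (Hl : is_lF F l)
  (Hhc : forall x, in_closed F l x -> continue_in h (in_closed F l) x)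
  (Hh0 : forall x, in_open F l x -> hd O x = h x)
  (Hhd : forall j x, (j < S k0)%nat -> in_open F l x -> derivable_pt_lim (hd j) x (hd (S j) x))
  (Hhk : forall x, in_open F l x -> continuity_pt (hd (S k0)) x)
  (HM : forall v, in_open F l v ->
        forall g, deriv_chain (in_open F l) (fun w => (h w - h l) / (w - l)) (S k0) g ->
        g (S k0) v <> 0)
  (Hid : forall u v, in_open F l u -> in_open F l v -> u < v ->
     forall G, deriv_chain (fun w => u < w /\ in_open F l w)
                           (fun w => (h w - h u) / (w - u)) k0 G ->
     cond_exp F (hd (S k0)) (S k0) 1 u v (INR (S k0) * G k0 v)) :
  rF_infinite F /\
   exists c, 0 < c /\ forall x, l <= x -> F x = 1 - exp (- (c * (x - l))).
Proof.
  assert (Hl0 : F l = 0) by (apply F_l0; auto).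
  assert (Hpos := F_pos_right F l HF Hl).
  assert (HhL := h_RLim F h l HFac Hl0 Hhc).
  assert (HRL : RLim l (Rfun F) 0).
  { rewrite <- (R_zero F l Hl0). apply RLim_cont. apply Rfun_cont; auto. lra. }
  assert (Hslope : forall v, in_open F l v -> exists d, 0 < d /\ forall u, l < u < l + d ->
            u < v /\ derivable_pt_lim (Rfun F) v ((Rfun F v - Rfun F u) / (v - u))).
  { intros v Hv.
    assert (HPl : P hd h l (S k0) v <> 0).
    { intros HP0. apply (HM v Hv (fun j w => P hd h l j w / (w - l) ^ (S j))).
      apply (chain_exists hd h l (S k0) (in_open F l) (in_open F l) (S k0) Hh0 Hhd). lia.
      intros w Hw; split; auto. destruct Hw; auto.
      rewrite HP0. unfold Rdiv; ring. }
    assert (HRv : 0 < Rfun F v) by (apply R_pos; [apply Hpos; destruct Hv; auto| apply open_lt1 with l; auto]).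
    destruct (P_RLim hd h l v (S k0) HhL (Rabs (P hd h l (S k0) v) / 2)) as [d1 [Hd1 H1]].
    { apply Rabs_pos_lt in HPl. lra. }
    destruct (HRL (Rfun F v) HRv) as [d2 [Hd2 H2]].
    destruct Hv as [Hlv Hbv].
    exists (Rmin (Rmin d1 d2) (v - l)). split. repeat apply Rmin_pos; lra.
    intros u Hu.
    pose proof (Rmin_l d1 d2). pose proof (Rmin_r d1 d2).
    pose proof (Rmin_l (Rmin d1 d2) (v - l)). pose proof (Rmin_r (Rmin d1 d2) (v - l)).
    split. lra.
    apply (deriv_R F h hd k0 l u v HF HFac Hh0 Hhd Hhk Hid); try lra. split; auto.
    - specialize (H2 u ltac:(lra)). rewrite Rminus_0_r in H2. apply abs_lt_inv in H2. lra.
    - specialize (H1 u ltac:(lra)). intros HPu. rewrite HPu in H1.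
      rewrite Rminus_0_l, Rabs_Ropp in H1. apply Rabs_pos_lt in HPl. lra. }
  destruct (F_cont_eps F HFac l (1/2)) as [d0 [Hd0 Hc0]]. lra.
  set (p := l + d0 / 4).
  assert (Hp : in_open F l p).
  { split. unfold p; lra. exists (l + d0/2). split. unfold p; lra.
    specialize (Hc0 (l + d0/2) ltac:(rewrite Rabs_right; lra)). rewrite Hl0 in Hc0. apply abs_lt_inv in Hc0. lra. }
  destruct (Hslope p Hp) as [dp [Hdp Hsp]].
  set (u0 := l + dp / 2).
  set (c := (Rfun F p - Rfun F u0) / (p - u0)).
  assert (Hcv : forall v, in_open F l v -> exists d, 0 < d /\ forall u, l < u < l + d -> Rfun F v - Rfun F u = c * (v - u)).
  { intros v Hv. destruct (Hslope v Hv) as [dv [Hdv Hsv]].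
    set (m := Rmin dv dp). assert (Hm : 0 < m) by (apply Rmin_pos; lra).
    pose proof (Rmin_l dv dp). pose proof (Rmin_r dv dp).
    exists m; split; auto. intros u Hu.
    set (u1 := l + m / 3). set (u2 := l + 2 * m / 3).
    destruct (Hsv u ltac:(unfold m in *; lra)) as [Hu' Du].
    destruct (Hsv u1 ltac:(unfold u1, m in *; lra)) as [Hu1 Du1].
    destruct (Hsv u2 ltac:(unfold u2, m in *; lra)) as [Hu2 Du2].
    destruct (Hsp u0 ltac:(unfold u0; lra)) as [Hu0p Dp0].
    destruct (Hsp u1 ltac:(unfold u1, m in *; lra)) as [Hu1p Dp1].
    destruct (Hsp u2 ltac:(unfold u2, m in *; lra)) as [Hu2p Dp2].
    assert (E1 := uniqueness_limite _ _ _ _ Du Du1).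
    assert (E2 := uniqueness_limite _ _ _ _ Du1 Du2).
    assert (E3 := uniqueness_limite _ _ _ _ Dp0 Dp1).
    assert (E4 := uniqueness_limite _ _ _ _ Dp1 Dp2).
    fold c in E3.
    set (dd := (Rfun F v - Rfun F u1) / (v - u1)) in *.
    assert (A1 : Rfun F v - Rfun F u1 = dd * (v - u1)) by (unfold dd; field; lra).
    assert (A2 : Rfun F v - Rfun F u2 = dd * (v - u2)) by (rewrite E2; field; lra).
    assert (A3 : Rfun F p - Rfun F u1 = c * (p - u1)) by (rewrite E3; field; lra).
    assert (A4 : Rfun F p - Rfun F u2 = c * (p - u2)) by (rewrite E3, E4; field; lra).
    assert (Hu12 : u2 - u1 <> 0) by (unfold u1, u2; lra).
    assert (Hdd : dd = c).
    { apply Rmult_eq_reg_r with (u2 - u1); auto. lra. }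
    assert (A0 : Rfun F v - Rfun F u = dd * (v - u)) by (rewrite <- E1; field; lra).
    rewrite A0, Hdd. auto. }
  assert (HRc : forall v, in_open F l v -> Rfun F v = c * (v - l)).
  { intros v Hv. destruct (Hcv v Hv) as [d [Hd Hdv]].
    destruct (Req_dec (Rfun F v - c * (v - l)) 0) as [H0|H0]. lra. exfalso.
    set (K := Rfun F v - c * (v - l)). apply Rabs_pos_lt in H0. fold K in H0.
    destruct (HRL (Rabs K / 2)) as [dR [HdR HR]]. lra.
    set (t := Rmin (Rmin d dR) (Rabs K / (2 * (Rabs c + 1)))).
    assert (Ht : 0 < t) by (unfold t; repeat apply Rmin_pos; try lra; apply Rdiv_lt_0_compat; [lra| pose proof (Rabs_pos c); lra]).
    assert (Ht1 : t <= Rmin d dR) by apply Rmin_l. assert (Ht2 : t <= Rabs K / (2 * (Rabs c + 1))) by apply Rmin_r.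
    pose proof (Rmin_l d dR). pose proof (Rmin_r d dR).
    set (u := l + t / 2).
    specialize (Hdv u ltac:(unfold u; lra)). specialize (HR u ltac:(unfold u; lra)). rewrite Rminus_0_r in HR.
    assert (Hcu : Rabs (c * (u - l)) < Rabs K / 2).
    { rewrite Rabs_mult, (Rabs_right (u - l)) by (unfold u; lra).
      apply Rle_lt_trans with (Rabs c * (Rabs K / (2 * (Rabs c + 1)))).
      apply Rmult_le_compat_l. apply Rabs_pos. unfold u; lra.
      replace (Rabs c * (Rabs K / (2 * (Rabs c + 1)))) with (Rabs K / 2 * (Rabs c / (Rabs c + 1))) by (field; pose proof (Rabs_pos c); lra).
      assert (Rabs c / (Rabs c + 1) < 1).
      { pose proof (Rabs_pos c). apply Rmult_lt_reg_r with (Rabs c + 1). lra. unfold Rdiv. rewrite Rmult_assoc, Rinv_l; lra. }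
      nra. }
    assert (HK : Rfun F u - c * (u - l) = K) by (unfold K; lra).
    assert (Rabs K <= Rabs (Rfun F u) + Rabs (c * (u - l))).
    { rewrite <- HK. unfold Rminus. eapply Rle_trans. apply Rabs_triang. rewrite Rabs_Ropp. lra. }
    lra. }
  assert (Hcpos : 0 < c).
  { pose proof (HRc p Hp). assert (0 < Rfun F p) by (apply R_pos; [apply Hpos; unfold p; lra| apply open_lt1 with l; auto]).
    assert (0 < p - l) by (unfold p; lra). nra. }
  assert (HFo : forall x, in_open F l x -> F x = 1 - exp (- (c * (x - l)))).
  { intros x Hx. pose proof (HRc x Hx) as Hr. unfold Rfun in Hr.
    assert (F x < 1) by (apply open_lt1 with l; auto).
    assert (1 - F x = exp (- (c * (x - l)))).
    { rewrite <- (exp_ln (1 - F x)) by lra. f_equal. lra. }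
    lra. }
  assert (Hinf : rF_infinite F).
  { intros M. apply NNPP. intros Hno.
    assert (HM1 : forall y, M < y -> 1 <= F y).
    { intros y Hy. destruct (Rlt_le_dec (F y) 1) as [Hlt|]; auto. exfalso; apply Hno; exists y; auto. }
    set (M1 := Rmax M l + 1). pose proof (Rmax_l M l). pose proof (Rmax_r M l).
    assert (HFM1 : 1 <= F M1) by (apply HM1; unfold M1; lra).
    set (dl := exp (- (c * (M1 - l)))).
    assert (Hdl0 : 0 < dl) by apply exp_pos.
    assert (Hdl1 : dl < 1).
    { unfold dl. rewrite <- exp_0. apply exp_increasing. assert (0 < c * (M1 - l)) by (apply Rmult_lt_0_compat; unfold M1; lra). lra. }
    set (z0 := 1 - dl / 2).
    destruct (IVT_cor (fun x => F x - z0) l M1) as [x [Hx Hfx]].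
    { apply continuity_minus. apply F_continuity; auto. apply continuity_const. intros a b; reflexivity. }
    unfold M1; lra.
    { rewrite Hl0. unfold z0. nra. }
    assert (HxM : x < M1) by (destruct (Req_dec x M1) as [->|]; [unfold z0 in Hfx; lra| lra]).
    assert (Hxl : l < x) by (destruct (Req_dec x l) as [->|]; [rewrite Hl0 in Hfx; unfold z0 in Hfx; lra| lra]).
    destruct (F_cont_eps F HFac x (1 - z0)) as [dx [Hdx Hcx]]. unfold z0; lra.
    set (y := x + Rmin dx (M1 - x) / 2).
    pose proof (Rmin_l dx (M1 - x)). pose proof (Rmin_r dx (M1 - x)). assert (0 < Rmin dx (M1 - x)) by (apply Rmin_pos; lra).
    assert (Hxo : in_open F l x).
    { split; auto. exists y. split. unfold y; lra.
      specialize (Hcx y ltac:(unfold y; rewrite Rabs_right; lra)). apply abs_lt_inv in Hcx. lra. }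
    pose proof (HFo x Hxo).
    assert (exp (- (c * (M1 - l))) < exp (- (c * (x - l)))).
    { apply exp_increasing. assert (c * (x - l) < c * (M1 - l)) by (apply Rmult_lt_compat_l; lra). lra. }
    fold dl in H5. unfold z0 in Hfx. lra. }
  split; auto. exists c. split; auto.
  intros x Hx. destruct (Req_dec x l) as [->|Hne].
  - rewrite Hl0. replace (- (c * (l - l))) with 0 by ring. rewrite exp_0. ring.
  - apply HFo. split. lra. destruct (Hinf x) as [y [Hy1 Hy2]]. exists y; auto.
Qed.

Theorem mainTheorem1 (F h : R -> R) (hd : nat -> R -> R) (n k : nat) (l : R)
  (Hn : (2 <= n)%nat) (Hk1 : (1 <= k)%nat) (Hk2 : (k <= n - 1)%nat)
  (HF : is_cdf F) (HFac : abs_continuous F) (Hl : is_lF F l)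
  (Hhc : forall x, in_closed F l x -> continue_in h (in_closed F l) x)
  (Hhd : deriv_chain (in_open F l) h k hd)
  (Hhk : forall x, in_open F l x -> continuity_pt (hd k) x)
  (HM : forall v, in_open F l v ->
        forall g, deriv_chain (in_open F l) (fun w => (h w - h l) / (w - l)) k g ->
        g k v <> 0) :
  (forall u v, in_open F l u -> in_open F l v -> u < v ->
     forall G, deriv_chain (fun w => u < w /\ in_open F l w)
                           (fun w => (h w - h u) / (w - u)) (k - 1) G ->
     cond_exp F (hd k) k 1 u v (INR k * G (k - 1)%nat v))
  <->
  (rF_infinite F /\
   exists c, 0 < c /\ forall x, l <= x -> F x = 1 - exp (- (c * (x - l)))).
Proof.
  split.
  - intros Hid. destruct k as [|k0]; [lia|].
    replace (S k0 - 1)%nat with k0 in Hid by lia.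
    destruct Hhd as [Hh0 Hhd1].
    apply (onlyif_dir F h hd k0 l HF HFac Hl Hhc Hh0 Hhd1 Hhk HM Hid).
  - intros [Hinf [c [Hc HFx]]]. apply (if_dir F h hd k l c Hk1 Hhd Hhk Hinf Hc HFx).
Qed.
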